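(* Let $w\geqslant2$ and $h=2^d$, $d\in\mathbb{N}$. Then $|\mathcal{H}_{h,w}|=w\cdot h$, where $\mathcal{H}_{h,w}$ is the set of fast Hough transform patterns on the $h\times w$ image.
   Context: Image: the set of pixels $p_{ij}$, $i=0,\dots,h-1$ (row, from the bottom), $j=0,\dots,w-1$ (column). A pattern is a nonempty set of pixels. For a pattern $T$ with exactly one pixel in each of its rows, $\Delta(T)=(j_{top}-j_{bot})\bmod w$ (column indices of topmost and bottommost pixels), $\mathit{tran}_{a,b}(T)=\{p_{i+a,\,(j+b)\bmod w}\mid p_{ij}\in T\}$. Define $\mathcal{H}_0=\{\{p_{0j}\}\mid j=0,\dots,w-1\}$, $\mathcal{H}_k=\{T\cup\mathit{tran}_{2^{k-1},\,\Delta(T)+s}(T)\mid T\in\mathcal{H}_{k-1},\ s\in\{0,1\}\}$ for $k=1,\dots,d$, and $\mathcal{H}_{h,w}=\mathcal{H}_d$ (as a set of distinct patterns). *)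

(* Defs.v *)
From mathcomp Require Import all_boot.
From mathcomp Require Import finmap.
Set Implicit Arguments. Unset Strict Implicit. Unset Printing Implicit Defensive.
Local Open Scope fset_scope.

(* A pixel p_{ij} is the pair (i, j) : nat * nat (i = row from the bottom,
   j = column, 0 <= j < w).  A pattern is a finite set of pixels. *)
Definition pixel := (nat * nat)%type.
Definition pattern := {fset pixel}.

Definition top_row (T : pattern) : nat := \max_(p <- T) p.1.
Definition bot_row (T : pattern) : nat := \big[minn/top_row T]_(p <- T) p.1.

(* column of the (unique, for the patterns considered) pixel of T in row r *)
Definition col_at (T : pattern) (r : nat) : nat :=
  head 0 [seq p.2 | p <- T & p.1 == r].

(* Delta(T) = (j_top - j_bot) mod w, computed in Z/wZ as nat *)
Definition Delta (w : nat) (T : pattern) : nat :=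
  (col_at T (top_row T) + (w - col_at T (bot_row T) %% w)) %% w.

Definition tran (w a b : nat) (T : pattern) : pattern :=
  [fset ((p.1 + a)%N, ((p.2 + b) %% w)%N) | p in T].

Fixpoint Hk (w k : nat) : {fset pattern} :=
  match k with
  | 0 => [fset [fset ((0%N, j) : pixel)] | j in iota 0 w]
  | k'.+1 =>
      [fset T `|` tran w (2 ^ k') (Delta w T + s) T
         | T in Hk w k', s in [:: 0; 1]]
  end.

Definition HT (d w : nat) : {fset pattern} := Hk w d.

(* Main.v *)
Require Import Defs.
From mathcomp Require Import all_boot.
From mathcomp Require Import finmap.
Local Open Scope fset_scope.

Definition Inv (k : nat) (T : pattern) :=
  exists f : nat -> nat, forall p : pixel, (p \in T) = (p.1 < 2 ^ k) && (p.2 == f p.1).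

Lemma size_enum_iota w : size (enum_finmem (mem (iota 0 w))) = w.
Proof. by rewrite /= undup_id ?iota_uniq ?size_iota. Qed.

Lemma in_tran w a b T p :
  (p \in tran w a b T) = [exists q : T, p == ((val q).1 + a, ((val q).2 + b) %% w)%N].
Proof.
apply/imfsetP/existsP => [[q qT ->]|[q /eqP ->]].
  by exists [` qT]; rewrite /=.
by exists (val q) => //; apply: valP.
Qed.

Lemma Inv_step w k T b : Inv k T -> Inv k.+1 (T `|` tran w (2 ^ k) b T).
Proof.
move=> [f Hf].
exists (fun r => if r < 2 ^ k then f r else (f (r - 2 ^ k) + b) %% w)%N.
move=> [r c] /=; rewrite in_fsetU in_tran Hf /= expnS mul2n -addnn.
case: ltnP => Hr /=.
  rewrite ltn_addr //=; case: (c == f r) => //=.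
  apply/negbTE/existsP => -[q /eqP [E _]].
  by move: Hr; rewrite E ltnNge leq_addl.
apply/existsP/andP => [[q /eqP [-> ->]]|[Hr2 /eqP ->]].
  have := valP q; rewrite Hf => /andP [Hq /eqP ->].
  by rewrite addnK ltn_add2r Hq.
have Hm : (r - 2 ^ k, f (r - 2 ^ k)) \in T.
  by rewrite Hf /= eqxx andbT ltn_subLR // addnC.
by exists [` Hm]; rewrite /= subnK.
Qed.

Lemma Inv_all w k T : T \in Hk w k -> Inv k T.
Proof.
elim: k T => [|k IH] T /=.
  move=> /imfsetP [j _ ->]; exists (fun _ => j) => -[r c] /=.
  rewrite in_fset1 /= xpair_eqE expn0 ltnS leqn0 //.
move=> /imfset2P [T' HT' [s _ ->]].
exact: Inv_step (IH _ HT').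
Qed.

Lemma inj_step w k T1 T2 s1 s2 : 2 <= w -> Inv k T1 -> Inv k T2 ->
  (s1 == 0) || (s1 == 1) -> (s2 == 0) || (s2 == 1) ->
  T1 `|` tran w (2 ^ k) (Delta w T1 + s1) T1 = T2 `|` tran w (2 ^ k) (Delta w T2 + s2) T2 ->
  T1 = T2 /\ s1 = s2.
Proof.
move=> w2 [f1 H1] [f2 H2] S1 S2 E.
have lowT (f : nat -> nat) (T : pattern) (H : forall p : pixel, (p \in T) = (p.1 < 2 ^ k) && (p.2 == f p.1)) b p :
    (p \in T `|` tran w (2 ^ k) b T) && (p.1 < 2 ^ k) = (p \in T).
  rewrite in_fsetU in_tran andb_orl.
  case: (boolP (p \in T)) => pT /=; first by move: pT; rewrite H => /andP [-> _].
  apply/negbTE/andP => -[/existsP [q /eqP ->]] /=.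
  by rewrite ltnNge leq_addl.
have ET : T1 = T2.
  by apply/fsetP => p; rewrite -(lowT _ _ H1 (Delta w T1 + s1)%N) E (lowT _ _ H2).
split=> //; subst T2.
have m : (2 ^ k, (f1 0 + (Delta w T1 + s1)) %% w)%N \in T1 `|` tran w (2 ^ k) (Delta w T1 + s1) T1.
  rewrite in_fsetU in_tran; apply/orP; right.
  have q0 : ((0, f1 0) : pixel) \in T1 by rewrite H1 /= expn_gt0 eqxx.
  by apply/existsP; exists [` q0].
move: m; rewrite E in_fsetU H1 /= ltnn /= in_tran => /existsP [q /eqP [e1 e2]].
have := valP q; rewrite H1 => /andP [_ /eqP e3].
move: e2; rewrite e3.
have -> : (val q).1 = 0 by move: e1; rewrite -{1}(add0n (2 ^ k)) => /addIn.
rewrite !addnA => /eqP; rewrite eqn_modDl => /eqP.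
move: S1 S2 => /orP [] /eqP -> /orP [] /eqP -> //;
  rewrite ?mod0n modn_small //.
Qed.

Lemma card_step w k : 2 <= w -> #|` Hk w k.+1| = (2 * #|` Hk w k|)%N.
Proof.
move=> w2 /=.
rewrite [LHS](perm_size (enum_imfset2 _ _)).
  by rewrite size_allpairs mulnC.
move=> [T1 s1] [T2 s2]; rewrite !inE /= => /andP [HT1 S1] /andP [HT2 S2] E.
have [ET Es] := inj_step _ _ _ _ _ _ w2 (Inv_all _ _ _ HT1) (Inv_all _ _ _ HT2) S1 S2 E.
by subst.
Qed.

Theorem proposition6 (w d : nat) : 2 <= w -> #|` HT d w| = (w * 2 ^ d)%N.
Proof.
move=> w2; rewrite /HT; elim: d => [|d IH].
  rewrite /= card_in_imfset ?size_enum_iota ?muln1 //.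
  by move=> i j _ _ /fsetP /(_ (0, i)); rewrite !in_fset1 eqxx => /esym/eqP [].
by rewrite card_step // IH expnS mulnCA.
Qed.
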